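(* Let $A$ be a finite set, $\bot,\dagger\notin A$ distinct extra symbols, $N\geq1$, and let $\mathsf L$, $\pi$ and $\zeta_t$ ($t>0$) be as in the context. Let $\mu_{\mathsf L}$ denote the Möbius function of the finite poset $\mathsf L$ (the inverse of the matrix $\zeta_{\mathsf L}(x,y)=1$ if $x\leq y$ and $0$ otherwise). Then for all $x,y\in\mathsf L$, $$\zeta_t^{-1}(x,y)=\pi(y|x)^t\,\mu_{\mathsf L}(x,y).$$
   Context: $A^*$ is the set of finite strings over $A$, $|x|$ denotes length (with $\bot,\dagger$ counted). $\mathsf L=\{\bot a : a\in A^*,\ |a|\leq N-1\}\sqcup\{\bot a\dagger : a\in A^*,\ |a|<N-1\}$, partially ordered by the prefix relation ($x\leq y$ iff $y=xa'$ for some string $a'$). Strings $\bot a$ are unfinished texts. For each unfinished text $x\in\mathsf L$ with $|x|\leq N-1$ a probability mass function $p(-|x)$ on $A\cup\{\dagger\}$ is given. Define $\pi(y|x)=1$ if $x=y$; $0$ if $x\not\leq y$; and if $x=\bot a_1\cdots a_t$ is a proper prefix of $y=xa_{t+1}\cdots a_{t+k}$, $\pi(y|x)=\prod_{i=1}^k p(a_{t+i}\mid\bot a_1\cdots a_{t+i-1})$. For $t>0$, $\zeta_t$ is the $\mathsf L\times\mathsf L$ matrix $\zeta_t(x,y)=\pi(y|x)^t$ (which is invertible). *)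

(* Defs.v *)
From HB Require Import structures.
From mathcomp Require Import all_boot all_order all_algebra.
From mathcomp Require Import reals exp.
Set Implicit Arguments. Unset Strict Implicit. Unset Printing Implicit Defensive.
Import Order.TTheory GRing.Theory Num.Theory.
Local Open Scope ring_scope.

(* Texts are encoded as a pair (word a, flag): flag = false encodes the
   unfinished text "bot a", flag = true encodes the finished text "bot a dagger".
   bot and dagger are thus distinct symbols not in A by construction. *)

Definition Ltext (A : finType) (N : nat) : finType :=
  {u : {i : 'I_N & i.-tuple A} * bool | u.2 ==> (tag u.1 < N.-1)%N}.

Definition word (A : finType) (N : nat) (x : Ltext A N) : seq A :=
  tval (tagged (val x).1).
Definition fin (A : finType) (N : nat) (x : Ltext A N) : bool := (val x).2.

Definition Lle (A : finType) (N : nat) (x y : Ltext A N) : bool :=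
  if fin x then x == y else prefix (word x) (word y).

(* pi(y|x); p w c is p(c | bot w), where c = Some a is a letter a and
   c = None is dagger. *)
Definition piL (A : finType) (N : nat) (R : realType) (p : seq A -> option A -> R)
    (x y : Ltext A N) : R :=
  if x == y then 1
  else if Lle x y then
    (\prod_(size (word x) <= i < size (word y)) p (take i (word y)) (onth (word y) i))
      * (if fin y then p (word y) None else 1)
  else 0.

Definition zeta_t (A : finType) (N : nat) (R : realType) (p : seq A -> option A -> R)
    (t : R) : 'M[R]_#|Ltext A N| :=
  \matrix_(i, j) (piL p (enum_val i) (enum_val j)) `^ t.

Definition zetaL (A : finType) (N : nat) (R : realType) : 'M[R]_#|Ltext A N| :=
  \matrix_(i, j) (Lle (enum_val i) (enum_val j))%:R.

Definition mobiusL (A : finType) (N : nat) (R : realType) (x y : Ltext A N) : R :=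
  invmx (zetaL A N R) (enum_rank x) (enum_rank y).

(* Main.v *)
Require Import Defs.
From HB Require Import structures.
From mathcomp Require Import all_boot all_order all_algebra.
From mathcomp Require Import reals exp.
Import Order.TTheory GRing.Theory Num.Theory.
Local Open Scope ring_scope.
Set Implicit Arguments. Unset Strict Implicit.

Definition rk (A : finType) (N : nat) (x : Ltext A N) : nat := size (word x) + fin x.

Lemma Ltext_inj (A : finType) (N : nat) (x y : Ltext A N) :
  word x = word y -> fin x = fin y -> x = y.
Proof.
case: x => [[[i s] b] hx]; case: y => [[[j s'] b'] hy].
rewrite /word /fin /= => E Eb; subst b'.
apply: val_inj => /=.
have eij : i = j by apply: val_inj; rewrite /= -(size_tuple s) -(size_tuple s') E.
subst j; congr (_, _); congr existT; exact: val_inj.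
Qed.

Lemma prefix_trans' (T : eqType) (a b c : seq T) : prefix a b -> prefix b c -> prefix a c.
Proof.
move=> /prefixP [s ->] /prefixP [s' ->]; rewrite -catA; exact: prefix_prefix.
Qed.

Lemma Lle_refl (A : finType) (N : nat) (x : Ltext A N) : Lle x x.
Proof. by rewrite /Lle; case: ifP => _ //; rewrite prefixE take_size. Qed.

Lemma Lle_trans (A : finType) (N : nat) (x y z : Ltext A N) :
  Lle x y -> Lle y z -> Lle x z.
Proof.
rewrite {1}/Lle; case fx: (fin x); first by move=> /eqP ->.
rewrite /Lle fx; case: (fin y) => [pxy /eqP <- //|].
exact: prefix_trans'.
Qed.

Lemma rk_lt (A : finType) (N : nat) (x y : Ltext A N) :
  Lle x y -> x != y -> (rk x < rk y)%N.
Proof.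
rewrite /Lle /rk; case fx: (fin x).
  by move=> /eqP ->; rewrite eqxx.
move=> pxy nxy.
have le : (size (word x) <= size (word y))%N.
  by move: pxy => /prefixP [s ->]; rewrite size_cat leq_addr.
rewrite addn0; move: le; rewrite leq_eqVlt => /orP [/eqP es|lt]; last first.
  exact: leq_trans lt (leq_addr _ _).
have ew : word x = word y.
  by move: pxy; rewrite prefixE es take_size => /eqP.
case fy: (fin y); first by rewrite es addn1.
by move: nxy; rewrite (Ltext_inj ew); rewrite ?fx ?fy // eqxx.
Qed.

Lemma rk_bound (A : finType) (N : nat) (x : Ltext A N) : (rk x < N)%N.
Proof.
case: x => [[[i s] b] hx]; rewrite /rk /word /fin /= size_tuple.
move: hx => /=; case: b => /= h; last by rewrite addn0.
by rewrite addn1 (leq_ltn_trans h) // ltn_predL (leq_ltn_trans _ (ltn_ord i)).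
Qed.
Lemma piL_refl (A : finType) (N : nat) (R : realType) (p : seq A -> option A -> R) (x : Ltext A N) :
  piL p x x = 1.
Proof. by rewrite /piL eqxx. Qed.

Lemma piL_out (A : finType) (N : nat) (R : realType) (p : seq A -> option A -> R) (x y : Ltext A N) :
  ~~ Lle x y -> piL p x y = 0.
Proof.
move=> nl; rewrite /piL (negbTE nl); case: ifP => // /eqP exy.
by move: nl; rewrite exy Lle_refl.
Qed.

Lemma size_word_lt (A : finType) (N : nat) (y : Ltext A N) :
  (size (word y) + fin y <= N - 1)%N.
Proof. by move: (rk_bound y); rewrite /rk subn1 => h; rewrite -ltnS prednK // (leq_ltn_trans _ h). Qed.

Lemma piL_ge0 (A : finType) (N : nat) (R : realType) (p : seq A -> option A -> R)
    (hp : forall a : seq A, (size a + 1 <= N - 1)%N ->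
          (forall c : option A, 0 <= p a c) /\ \sum_(c : option A) p a c = 1)
    (x y : Ltext A N) : 0 <= piL p x y.
Proof.
rewrite /piL; case: ifP => // _; case: ifP => // _.
have hy := size_word_lt y.
apply: mulr_ge0.
  rewrite big_nat_cond; apply: prodr_ge0 => i /andP [/andP [_ hi] _]; apply: (proj1 (hp _ _)).
  rewrite size_take hi addn1; apply: leq_trans hy; exact: leq_trans hi (leq_addr _ _).
case fy: (fin y) => //; apply: (proj1 (hp _ _)).
by move: hy; rewrite fy.
Qed.

Lemma piL_mul (A : finType) (N : nat) (R : realType) (p : seq A -> option A -> R)
    (x y z : Ltext A N) : Lle x y -> Lle y z -> piL p x z = piL p x y * piL p y z.
Proof.
move=> lxy lyz.
have [exy|nxy] := eqVneq x y; first by rewrite -exy piL_refl mul1r.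
have [eyz|nyz] := eqVneq y z; first by rewrite -eyz piL_refl mulr1.
have [exz|nxz] := eqVneq x z.
  have h1 := rk_lt lxy nxy; have h2 := rk_lt lyz nyz.
  by move: (ltn_trans h1 h2); rewrite exz ltnn.
have lxz := Lle_trans lxy lyz.
have fx : fin x = false by move: lxy nxy; rewrite /Lle; case: (fin x) => // ->.
have fy : fin y = false by move: lyz nyz; rewrite /Lle; case: (fin y) => // ->.
rewrite /piL (negbTE nxy) (negbTE nyz) (negbTE nxz) lxy lyz lxz fy mulr1.
move: lxy lyz; rewrite /Lle fx fy => /prefixP [s ew] /prefixP [s' ew'].
rewrite mulrA; congr (_ * _).
have sxy : (size (word x) <= size (word y))%N by rewrite ew size_cat leq_addr.
have syz : (size (word y) <= size (word z))%N by rewrite ew' size_cat leq_addr.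
rewrite (big_cat_nat sxy syz) /=; congr (_ * _).
apply: eq_big_nat => i /andP [_ hi].
by rewrite ew' take_cat onth_cat hi.
Qed.

Definition suppL (A : finType) (N : nat) (R : realType) (B : 'M[R]_#|Ltext A N|) :=
  forall i j, ~~ Lle (enum_val i) (enum_val j) -> B i j = 0.

Definition PhiL (A : finType) (N : nat) (R : realType) (p : seq A -> option A -> R) (t : R)
  (B : 'M[R]_#|Ltext A N|) : 'M[R]_#|Ltext A N| :=
  \matrix_(i, j) (B i j * (piL p (enum_val i) (enum_val j)) `^ t).

Lemma Phi_mul (A : finType) (N : nat) (R : realType) (p : seq A -> option A -> R)
    (hp : forall a : seq A, (size a + 1 <= N - 1)%N ->
          (forall c : option A, 0 <= p a c) /\ \sum_(c : option A) p a c = 1)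
    (t : R) (B C : 'M[R]_#|Ltext A N|) :
  suppL B -> suppL C -> PhiL p t (B *m C) = PhiL p t B *m PhiL p t C.
Proof.
move=> hB hC; apply/matrixP => i j; rewrite !mxE big_distrl /=.
apply: eq_bigr => k _; rewrite !mxE.
case: (boolP (Lle (enum_val i) (enum_val k))) => lik; last by rewrite (hB _ _ lik) !(mulr0, mul0r).
case: (boolP (Lle (enum_val k) (enum_val j))) => lkj; last by rewrite (hC _ _ lkj) !(mulr0, mul0r).
by rewrite (piL_mul p lik lkj) powRM ?(piL_ge0 hp) // mulrACA.
Qed.

Lemma zeta_Phi (A : finType) (N : nat) (R : realType) (p : seq A -> option A -> R) (t : R) :
  t != 0 -> zeta_t N p t = PhiL p t (zetaL A N R).
Proof.
move=> t0; apply/matrixP => i j; rewrite !mxE.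
case: (boolP (Lle (enum_val i) (enum_val j))) => l; first by rewrite mul1r.
by rewrite mul0r piL_out // powR0.
Qed.

Lemma Phi1 (A : finType) (N : nat) (R : realType) (p : seq A -> option A -> R) (t : R) :
  PhiL p t (1%:M : 'M[R]_#|Ltext A N|) = 1%:M.
Proof.
apply/matrixP => i j; rewrite !mxE.
case: (eqVneq i j) => [->|nij]; last by rewrite mul0r.
by rewrite piL_refl powR1 mul1r.
Qed.

Definition TL (A : finType) (N : nat) (R : realType) : 'M[R]_#|Ltext A N| :=
  - (zetaL A N R - 1%:M).

Definition PkL (A : finType) (N : nat) (R : realType) (k : nat) : 'M[R]_#|Ltext A N| :=
  iter k (mulmx (TL A N R)) 1%:M.

Lemma PkL_supp (A : finType) (N : nat) (R : realType) (k : nat) i j :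
  PkL A N R k i j != 0 ->
  Lle (enum_val i) (enum_val j) && (rk (enum_val i) + k <= rk (enum_val j))%N.
Proof.
elim: k i j => [|k IH] i j.
  rewrite /PkL /= mxE; case: (eqVneq i j) => [->|]; last by rewrite eqxx.
  by rewrite Lle_refl addn0 leqnn.
rewrite /PkL /= mxE => nz.
case: (pickP [pred l | TL A N R i l * PkL A N R k l j != 0]) => [l /= nzl|H]; last first.
  by move: nz; rewrite big1 ?eqxx // => l _; move: (H l) => /= /negbFE /eqP.
have nT : TL A N R i l != 0 by apply: contraNneq nzl => ->; rewrite mul0r.
have nP : PkL A N R k l j != 0 by apply: contraNneq nzl => ->; rewrite mulr0.
have /andP [l2 r2] := IH _ _ nP.
move: nT; rewrite /TL !mxE.
case: (eqVneq i l) => [->|nil].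
  by rewrite Lle_refl subrr oppr0 eqxx.
rewrite subr0.
have neq : enum_val i != enum_val l by apply: contra nil => /eqP /enum_val_inj ->.
case: (boolP (Lle (enum_val i) (enum_val l))) => l1; last by rewrite oppr_eq0 pnatr_eq0.
move=> _.
rewrite (Lle_trans l1 l2) /= addnS -addSn; apply: leq_trans r2.
by rewrite leq_add2r rk_lt.
Qed.

Lemma PkL_N (A : finType) (N : nat) (R : realType) : PkL A N R N = 0.
Proof.
apply/matrixP => i j; rewrite mxE; apply/eqP; apply: contraT => /PkL_supp /andP [_ h].
by have := leq_ltn_trans h (rk_bound (enum_val j)); rewrite ltnNge leq_addl.
Qed.

Definition GL (A : finType) (N : nat) (R : realType) : 'M[R]_#|Ltext A N| :=
  \sum_(k < N) PkL A N R k.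

Lemma zetaG (A : finType) (N : nat) (R : realType) : zetaL A N R *m GL A N R = 1%:M.
Proof.
have -> : zetaL A N R = 1%:M - TL A N R by rewrite /TL opprK addrC subrK.
rewrite mulmxBl mul1mx /GL mulmx_sumr.
have -> : \sum_(k < N) TL A N R *m PkL A N R k = \sum_(k < N) PkL A N R k.+1 by [].
have := telescope_sumr (fun k => PkL A N R k) (leq0n N).
rewrite sumrB !big_mkord PkL_N => T.
by rewrite -opprB T sub0r opprK.
Qed.

Lemma suppG (A : finType) (N : nat) (R : realType) : suppL (GL A N R).
Proof.
move=> i j nl; rewrite /GL summxE big1 // => k _.
apply/eqP; apply: contraT => /PkL_supp /andP [h _]; by rewrite h in nl.
Qed.

Lemma invzeta (A : finType) (N : nat) (R : realType) : invmx (zetaL A N R) = GL A N R.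
Proof.
have [u _] := mulmx1_unit (zetaG A N R).
by rewrite -[RHS](mulKmx u) zetaG mulmx1.
Qed.

Lemma suppZ (A : finType) (N : nat) (R : realType) : suppL (zetaL A N R).
Proof. by move=> i j nl; rewrite mxE (negbTE nl). Qed.

Theorem corollary3p7 (A : finType) (N : nat) (hN : (1 <= N)%N) (R : realType)
    (p : seq A -> option A -> R)
    (hp : forall a : seq A, (size a + 1 <= N - 1)%N ->
          (forall c : option A, 0 <= p a c) /\ \sum_(c : option A) p a c = 1)
    (t : R) (ht : 0 < t) (x y : Ltext A N) :
  invmx (zeta_t N p t) (enum_rank x) (enum_rank y)
    = (piL p x y) `^ t * mobiusL R x y.
Proof.
have t0 : t != 0 by rewrite gt_eqF.
have E : zeta_t N p t *m PhiL p t (GL A N R) = 1%:M.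
  by rewrite zeta_Phi // -Phi_mul ?zetaG ?Phi1 //; [exact: suppZ | exact: suppG].
have [u _] := mulmx1_unit E.
have -> : invmx (zeta_t N p t) = PhiL p t (GL A N R).
  by rewrite -[RHS](mulKmx u) E mulmx1.
by rewrite mxE /mobiusL invzeta !enum_rankK mulrC.
Qed.
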